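(* Let $G=(V,E,\sigma)$ be a graph as in the context and $\Gamma$ a nonempty family of walks. Then the function $p\mapsto\mathrm{Mod}_p(\Gamma)$ is continuous on $[1,\infty)$.
   Context: Let $G=(V,E,\sigma)$ be a finite simple graph (directed or undirected) with edge weights $\sigma:E\to(0,\infty)$. A walk is a string of edges $e_1\dots e_r$, $r\ge1$, $e_i=(v_i,v_{i+1})\in E$, with $\rho$-length $\ell_\rho(\gamma)=\sum_i\rho(e_i)$. $A(\Gamma)=\{\rho:E\to\mathbb{R}:\rho\ge0,\ \ell_\rho(\gamma)\ge1\ \forall\gamma\in\Gamma\}$, $\mathcal{E}_p(\rho)=\sum_e\sigma(e)|\rho(e)|^p$, $\mathrm{Mod}_p(\Gamma)=\inf_{\rho\in A(\Gamma)}\mathcal{E}_p(\rho)$. *)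

(* Defs.v *)
From Stdlib Require Import Reals List ClassicalEpsilon.
Open Scope R_scope.

(* Edges are given as a duplicate-free list E of
   ordered pairs; in the undirected case the pair (v,w) is a representative
   of the unordered edge {v,w} and may be traversed in both directions. *)

Definition simple_graph {V : Type} (dir : bool) (E : list (V * V)) : Prop :=
  NoDup E /\
  (forall e, In e E -> fst e <> snd e) /\
  (dir = false -> forall v w, In (v, w) E -> ~ In (w, v) E).

Definition trav {V : Type} (dir : bool) (e : V * V) (v w : V) : Prop :=
  e = (v, w) \/ (dir = false /\ e = (w, v)).

Fixpoint walk_from {V : Type} (dir : bool) (E : list (V * V)) (v : V)
    (es : list (V * V)) : Prop :=
  match es with
  | nil => True
  | e :: es' => In e E /\ exists w, trav dir e v w /\ walk_from dir E w es'
  end.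

Definition is_walk {V : Type} (dir : bool) (E : list (V * V))
    (es : list (V * V)) : Prop :=
  es <> nil /\ exists v, walk_from dir E v es.

Definition rho_length {V : Type} (rho : V * V -> R) (es : list (V * V)) : R :=
  fold_right (fun e acc => rho e + acc) 0 es.

Definition powabs (x p : R) : R :=
  if Req_EM_T x 0 then 0 else Rpower (Rabs x) p.

Definition energy {V : Type} (E : list (V * V)) (sigma : V * V -> R)
    (p : R) (rho : V * V -> R) : R :=
  fold_right (fun e acc => sigma e * powabs (rho e) p + acc) 0 E.

Definition admissible {V : Type} (E : list (V * V))
    (Gamma : list (V * V) -> Prop) (rho : V * V -> R) : Prop :=
  (forall e, In e E -> 0 <= rho e) /\
  (forall g, Gamma g -> 1 <= rho_length rho g).

Definition is_glb (S : R -> Prop) (m : R) : Prop :=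
  (forall x, S x -> m <= x) /\ (forall b, (forall x, S x -> b <= x) -> b <= m).

Definition Mod {V : Type} (E : list (V * V)) (sigma : V * V -> R)
    (Gamma : list (V * V) -> Prop) (p : R) : R :=
  epsilon (inhabits 0)
    (is_glb (fun x => exists rho, admissible E Gamma rho /\ x = energy E sigma p rho)).

(* Main.v *)
Require Import Defs.
From Stdlib Require Import Reals List Lra ClassicalEpsilon.
Open Scope R_scope.

Lemma exple x y : x <= y -> exp x <= exp y.
Proof. intros H; destruct (Rle_lt_or_eq_dec _ _ H) as [H1|H1];
  [left; apply exp_increasing; auto | subst; lra]. Qed.

Lemma powabs_ge0 x p : 0 <= powabs x p.
Proof. unfold powabs; destruct (Req_EM_T x 0); [lra|].
  unfold Rpower; left; apply exp_pos. Qed.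

Lemma powabs_mono x y p : 0 <= p -> 0 <= x <= y -> powabs x p <= powabs y p.
Proof.
  intros Hp Hxy. unfold powabs.
  destruct (Req_EM_T x 0); [destruct (Req_EM_T y 0); [lra| unfold Rpower; left; apply exp_pos]|].
  destruct (Req_EM_T y 0); [lra|].
  rewrite !Rabs_pos_eq by lra. apply Rle_Rpower_l; lra.
Qed.

Lemma key_ineq a p q : a <= 0 -> 1 <= p -> p <= q ->
  exp (p * a) - exp (q * a) <= q - p /\ exp (q*a) <= exp (p*a).
Proof.
  intros Ha Hp Hq.
  assert (E1 : exp (q*a) = exp (p*a) * exp ((q-p)*a)).
  { rewrite <- exp_plus. f_equal; ring. }
  assert (E2 := exp_ineq1_le ((q-p)*a)).
  assert (E3 : exp ((q-p)*a) <= 1).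
  { rewrite <- exp_0. apply exple. nra. }
  assert (E4 : exp (p*a) <= exp a) by (apply exple; nra).
  assert (E5 := exp_ineq1_le (-a)).
  rewrite exp_Ropp in E5.
  assert (E6 := exp_pos a). assert (E7 := exp_pos (p*a)).
  assert (E8 : exp a * (1 - a) <= 1).
  { apply Rmult_le_reg_r with (/ exp a). apply Rinv_0_lt_compat; auto.
    field_simplify; try lra. }
  rewrite E1. split; [|nra].
  assert (exp (p*a) * (1 - exp ((q-p)*a)) <= exp (p*a) * (-(q-p)*a)) by nra.
  assert (exp (p*a) * (-(q-p)*a) <= exp a * (-(q-p)*a)) by nra.
  assert (exp a * (- a) <= 1) by nra.
  nra.
Qed.

Lemma powabs_lip x p q : 0 <= x <= 1 -> 1 <= p -> 1 <= q ->
  powabs x q <= powabs x p + Rabs (q - p).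
Proof.
  intros Hx Hp Hq. unfold powabs.
  destruct (Req_EM_T x 0); [assert (0 <= Rabs (q-p)) by apply Rabs_pos; lra|].
  rewrite Rabs_pos_eq by lra. unfold Rpower.
  assert (Ha : ln x <= 0).
  { destruct (Rle_lt_or_eq_dec _ _ (proj2 Hx)) as [H|H].
    - rewrite <- ln_1. left; apply ln_increasing; lra.
    - subst; rewrite ln_1; lra. }
  destruct (Rle_dec p q).
  - destruct (key_ineq (ln x) p q Ha Hp r). rewrite Rabs_pos_eq by lra; lra.
  - destruct (key_ineq (ln x) q p Ha Hq ltac:(lra)).
    rewrite Rabs_minus_sym, Rabs_pos_eq by lra; lra.
Qed.

Definition ssum {V : Type} (E : list (V*V)) (sigma : V*V -> R) :=
  fold_right (fun e acc => sigma e + acc) 0 E.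

Lemma ssum_ge0 {V : Type} (E : list (V*V)) sigma :
  (forall e, In e E -> 0 < sigma e) -> 0 <= ssum E sigma.
Proof. induction E; simpl; intros H; [lra|].
  assert (0 < sigma a) by (apply H; simpl; auto). assert (0 <= ssum E sigma) by (apply IHE; intros; apply H; simpl; auto). lra. Qed.

Lemma energy_lip {V : Type} (E : list (V*V)) sigma rho p q :
  (forall e, In e E -> 0 < sigma e) ->
  (forall e, In e E -> 0 <= rho e <= 1) -> 1 <= p -> 1 <= q ->
  energy E sigma q rho <= energy E sigma p rho + ssum E sigma * Rabs (q - p).
Proof.
  intros Hs Hr Hp Hq. induction E as [|a E IH]; simpl; [lra|].
  assert (0 < sigma a) by (apply Hs; simpl; auto).
  assert (powabs (rho a) q <= powabs (rho a) p + Rabs (q-p)) by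
    (apply powabs_lip; auto; apply Hr; simpl; auto).
  assert (energy E sigma q rho <= energy E sigma p rho + ssum E sigma * Rabs (q - p))
    by (apply IH; intros; [apply Hs|apply Hr]; simpl; auto). nra.
Qed.

Lemma energy_mono {V : Type} (E : list (V*V)) sigma r1 r2 p :
  0 <= p ->
  (forall e, In e E -> 0 < sigma e) ->
  (forall e, In e E -> 0 <= r1 e <= r2 e) ->
  energy E sigma p r1 <= energy E sigma p r2.
Proof.
  intros Hp Hs Hr. induction E as [|a E IH]; simpl; [lra|].
  assert (0 < sigma a) by (apply Hs; simpl; auto).
  assert (powabs (r1 a) p <= powabs (r2 a) p) by (apply powabs_mono; auto; apply Hr; simpl; auto).
  assert (energy E sigma p r1 <= energy E sigma p r2) by (apply IH; intros; [apply Hs|apply Hr]; simpl; auto). nra.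
Qed.

Lemma energy_ge0 {V : Type} (E : list (V*V)) sigma p rho :
  (forall e, In e E -> 0 < sigma e) -> 0 <= energy E sigma p rho.
Proof. intros Hs. induction E as [|a E IH]; simpl; [lra|].
  assert (0 < sigma a) by (apply Hs; simpl; auto). assert (0 <= powabs (rho a) p) by apply powabs_ge0.
  assert (0 <= energy E sigma p rho) by (apply IH; intros; apply Hs; simpl; auto). nra. Qed.

Lemma walk_in {V : Type} dir (E : list (V*V)) v es :
  walk_from dir E v es -> forall e, In e es -> In e E.
Proof.
  revert v; induction es as [|a es IH]; simpl; intros v H e He; [contradiction|].
  destruct H as [Ha [w [_ Hw]]]. destruct He; [subst; auto| eapply IH; eauto].
Qed.

Definition trunc {V : Type} (rho : V*V -> R) := fun e => Rmin (rho e) 1.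

Lemma trunc_len {V : Type} (E : list (V*V)) rho g :
  (forall e, In e E -> 0 <= rho e) -> (forall e, In e g -> In e E) ->
  0 <= rho_length (trunc rho) g /\ Rmin 1 (rho_length rho g) <= rho_length (trunc rho) g.
Proof.
  intros Hr. induction g as [|a g IH]; simpl; intros Hg.
  - unfold Rmin; destruct Rle_dec; lra.
  - assert (0 <= rho a) by (apply Hr, Hg; simpl; auto).
    destruct IH as [I1 I2]; [intros; apply Hg; simpl; auto|].
    change (trunc rho a) with (Rmin (rho a) 1). unfold Rmin in *. destruct (Rle_dec (rho a) 1);
    destruct (Rle_dec 1 (rho_length rho g)); destruct (Rle_dec 1 (rho a + rho_length rho g)); lra.
Qed.

Lemma Mod_glb {V : Type} dir (E : list (V*V)) sigma Gamma p :
  (forall e, In e E -> 0 < sigma e) ->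
  (forall g, Gamma g -> is_walk dir E g) ->
  is_glb (fun x => exists rho, admissible E Gamma rho /\ x = energy E sigma p rho)
    (Mod E sigma Gamma p).
Proof.
  intros Hs Hw. unfold Mod. apply epsilon_spec.
  set (S := fun x => exists rho, admissible E Gamma rho /\ x = energy E sigma p rho).
  destruct (completeness (fun y => S (- y))) as [m [Hm1 Hm2]].
  - exists 0. intros y [rho [_ Hy]]. assert (0 <= energy E sigma p rho) by
      (apply energy_ge0; auto). lra.
  - exists (- energy E sigma p (fun _ => 1)). unfold S. exists (fun _ => 1).
    split; [|ring]. split; [intros; lra|].
    intros g Hg. destruct (Hw g Hg) as [Hne _]. destruct g as [|a g]; [congruence|].
    simpl. clear. assert (forall l : list (V*V), 0 <= rho_length (fun _ => 1) l).
    { induction l; simpl; lra. } specialize (H g). lra.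
  - exists (- m). split.
    + intros x Hx. assert (- x <= m) by (apply Hm1; unfold S; rewrite Ropp_involutive; auto). lra.
    + intros b Hb. assert (m <= - b).
      { apply Hm2. intros y Hy. specialize (Hb _ Hy). lra. } lra.
Qed.

Lemma Mod_half {V : Type} dir (E : list (V*V)) sigma Gamma p q :
  (forall e, In e E -> 0 < sigma e) ->
  (forall g, Gamma g -> is_walk dir E g) -> 1 <= p -> 1 <= q ->
  Mod E sigma Gamma q - ssum E sigma * Rabs (q - p) <= Mod E sigma Gamma p.
Proof.
  intros Hs Hw Hp Hq.
  destruct (Mod_glb dir E sigma Gamma p Hs Hw) as [_ Gp].
  destruct (Mod_glb dir E sigma Gamma q Hs Hw) as [Gq _].
  apply Gp. intros x [rho [[Ha1 Ha2] ->]].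
  assert (Adm : admissible E Gamma (trunc rho)).
  { split.
    - intros e He. unfold trunc, Rmin; destruct Rle_dec; auto; lra.
    - intros g Hg. destruct (Hw g Hg) as [_ [v Hv]].
      destruct (trunc_len E rho g Ha1 (walk_in dir E v g Hv)) as [_ H].
      specialize (Ha2 g Hg). unfold Rmin in H; destruct Rle_dec in H; lra. }
  assert (Mod E sigma Gamma q <= energy E sigma q (trunc rho)) by (apply Gq; eauto).
  assert (energy E sigma q (trunc rho) <= energy E sigma p (trunc rho) + ssum E sigma * Rabs (q - p)).
  { apply energy_lip; auto. intros e He; specialize (Ha1 e He); unfold trunc, Rmin;
    destruct Rle_dec; lra. }
  assert (energy E sigma p (trunc rho) <= energy E sigma p rho).
  { apply energy_mono; auto; [lra|]. intros e He; specialize (Ha1 e He); unfold trunc, Rmin;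
    destruct Rle_dec; lra. }
  lra.
Qed.

Theorem mainTheorem9 (V : Type) (dir : bool) (E : list (V * V))
  (sigma : V * V -> R) (Gamma : list (V * V) -> Prop) :
  simple_graph dir E ->
  (forall e, In e E -> 0 < sigma e) ->
  (forall g, Gamma g -> is_walk dir E g) ->
  (exists g, Gamma g) ->
  forall p, 1 <= p ->
    forall eps, 0 < eps -> exists delta, 0 < delta /\
      forall q, 1 <= q -> Rabs (q - p) < delta ->
        Rabs (Mod E sigma Gamma q - Mod E sigma Gamma p) < eps.
Proof.
  intros _ Hs Hw _ p Hp eps Heps.
  set (S := ssum E sigma). assert (HS : 0 <= S) by (apply ssum_ge0; auto).
  exists (eps / (S + 1)). split.
  { apply Rdiv_lt_0_compat; lra. }
  intros q Hq Hd.
  assert (H1 := Mod_half dir E sigma Gamma p q Hs Hw Hp Hq).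
  assert (H2 := Mod_half dir E sigma Gamma q p Hs Hw Hq Hp).
  rewrite Rabs_minus_sym in H2. fold S in H1, H2.
  assert (S * Rabs (q - p) <= S * (eps / (S+1))).
  { apply Rmult_le_compat_l; lra. }
  assert (S * (eps / (S+1)) < eps).
  { apply Rmult_lt_reg_r with (S+1); [lra|]. field_simplify; lra. }
  apply Rabs_def1; lra.
Qed.
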